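(* Let $k\ge2$, $0\le\alpha<1$, and let $G$ be a connected $k$-uniform hypergraph on $n$ vertices with $m$ edges, degrees $d_i$ ($i\in V(G)$) and maximum degree $\Delta$. Let $x$ be the $\alpha$-Perron vector of $G$ and $\overline{x}=\max_i x_i$. Then \[\rho_\alpha(G)\le\alpha\Delta+(1-\alpha)km\,\overline{x}^{\,k}\] and \[\rho_\alpha(G)\le\alpha\Delta+(1-\alpha)\Big(\sum_{i\in V(G)}d_i^{\frac{k}{k-1}}\Big)^{\frac{k-1}{k}}\overline{x}^{\,k-1},\] and equality holds in either inequality if and only if $G$ is regular.
   Context: Hypergraphs are finite with edges being sets; $k$-uniform means every edge has $k$ vertices; $d_i$ is the number of edges containing $i$; regular means all degrees equal. $\mathcal A(G)$ is the order-$k$ dimension-$n$ tensor with $(i_1,\dots,i_k)$-entry $\frac1{(k-1)!}$ if $\{i_1,\dots,i_k\}\in E(G)$, $0$ otherwise; $\mathcal D(G)$ is the diagonal tensor with $(i,\dots,i)$-entry $d_i$; $\mathcal A_\alpha(G)=\alpha\mathcal D(G)+(1-\alpha)\mathcal A(G)$. For an order-$k$ tensor $\mathcal T$, $(\mathcal Tx)_i=\sum_{i_2,\dots,i_k}\mathcal T_{ii_2\dots i_k}x_{i_2}\cdots x_{i_k}$; $\lambda$ is an eigenvalue if $\mathcal Tx=\lambda x^{[k-1]}$ for some $x\neq 0$, where $x^{[k-1]}=(x_i^{k-1})_i$. $\rho_\alpha(G)$ is the largest modulus of an eigenvalue of $\mathcal A_\alpha(G)$. A path is an alternating sequence of distinct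 vertices and distinct edges $(v_0,e_1,\dots,e_s,v_s)$ with $v_{i-1},v_i\in e_i$; $G$ is connected if any two vertices are joined by a path. For connected $G$, the $\alpha$-Perron vector of $G$ is the unique vector $x$ with all entries positive, $\sum_i x_i^k=1$, and $\mathcal A_\alpha(G)x=\rho_\alpha(G)x^{[k-1]}$. *)

(* Defs.v *)
From HB Require Import structures.
From mathcomp Require Import all_boot all_order all_algebra.
Set Implicit Arguments. Unset Strict Implicit. Unset Printing Implicit Defensive.
Import Order.TTheory GRing.Theory Num.Theory.
Local Open Scope ring_scope.

Definition uniform (n k : nat) (E : {set {set 'I_n}}) : Prop :=
  forall e, e \in E -> #|e| = k.

Definition deg (n : nat) (E : {set {set 'I_n}}) (i : 'I_n) : nat :=
  #|[set e in E | i \in e]|.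

Definition max_deg (n : nat) (E : {set {set 'I_n}}) : nat :=
  (\max_(i < n) deg E i)%N.

Definition regular (n : nat) (E : {set {set 'I_n}}) : Prop :=
  forall i j : 'I_n, deg E i = deg E j.

Definition is_path (n : nat) (E : {set {set 'I_n}}) (u v : 'I_n)
  (vs : seq 'I_n) (es : seq {set 'I_n}) : Prop :=
  [/\ size vs = (size es).+1, uniq vs, uniq es &
      all (fun e => e \in E) es] /\
  [/\ nth u vs 0 = u, last u vs = v &
      (forall t, (t < size es)%N ->
        (nth u vs t \in nth set0 es t) /\ (nth u vs t.+1 \in nth set0 es t))].

Definition connected (n : nat) (E : {set {set 'I_n}}) : Prop :=
  forall u v : 'I_n, exists vs es, is_path E u v vs es.

(* order-k, dimension-n tensors: functions of the index k-tuple *)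
Definition tensor (C : Type) (n k : nat) := {ffun 'I_k -> 'I_n} -> C.

(* (T x)_i = sum_{i_2..i_k} T_{i i_2 .. i_k} x_{i_2} ... x_{i_k} *)
Definition tapply (C : numClosedFieldType) (n k : nat) (T : tensor C n k)
  (x : 'I_n -> C) (i : 'I_n) : C :=
  \sum_(f : {ffun 'I_k -> 'I_n} | [forall j : 'I_k, (val j == 0%N) ==> (f j == i)])
     T f * \prod_(j : 'I_k | val j != 0%N) x (f j).

Definition adj_tensor (C : numClosedFieldType) (n k : nat)
  (E : {set {set 'I_n}}) : tensor C n k :=
  fun f => if [set f j | j : 'I_k] \in E then ((k.-1)`!)%:R^-1 else 0.

Definition deg_tensor (C : numClosedFieldType) (n k : nat)
  (E : {set {set 'I_n}}) : tensor C n k :=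
  fun f => \sum_(i : 'I_n | [forall j : 'I_k, f j == i]) (deg E i)%:R.

Definition A_alpha (C : numClosedFieldType) (n k : nat)
  (E : {set {set 'I_n}}) (alpha : C) : tensor C n k :=
  fun f => alpha * @deg_tensor C n k E f + (1 - alpha) * @adj_tensor C n k E f.

Definition is_eigenvalue (C : numClosedFieldType) (n k : nat)
  (T : tensor C n k) (lam : C) : Prop :=
  exists x : 'I_n -> C, (exists i, x i != 0) /\
    forall i, tapply T x i = lam * x i ^+ k.-1.

Definition is_spectral_radius (C : numClosedFieldType) (n k : nat)
  (T : tensor C n k) (rho : C) : Prop :=
  (exists lam, is_eigenvalue T lam /\ `|lam| = rho) /\
  (forall lam, is_eigenvalue T lam -> `|lam| <= rho).

Definition is_alpha_perron_vector (C : numClosedFieldType) (n k : nat)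
  (E : {set {set 'I_n}}) (alpha rho : C) (x : 'I_n -> C) : Prop :=
  [/\ forall i, 0 < x i,
      \sum_i x i ^+ k = 1 &
      forall i, tapply (@A_alpha C n k E alpha) x i = rho * x i ^+ k.-1].

(* Main.v *)
Require Import Defs.
From HB Require Import structures.
From mathcomp Require Import all_boot all_order all_algebra.
From mathcomp Require Import ring.
Set Implicit Arguments. Unset Strict Implicit. Unset Printing Implicit Defensive.
Import Order.TTheory GRing.Theory Num.Theory.
Local Open Scope ring_scope.



Section Count.
Variables (n k : nat) (i : 'I_n).

Definition ext (g : {ffun 'I_k -> 'I_n}) : {ffun 'I_k.+1 -> 'I_n} :=
  [ffun j => if unlift ord0 j is Some j' then g j' else i].

Lemma ext0 g : ext g ord0 = i.
Proof. by rewrite ffunE unlift_none. Qed.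

Lemma extS g j : ext g (lift ord0 j) = g j.
Proof. by rewrite ffunE liftK. Qed.

Lemma ext_inj : injective ext.
Proof. by move=> g1 g2 H; apply/ffunP => j; rewrite -!extS H. Qed.

Lemma ext_surj (f : {ffun 'I_k.+1 -> 'I_n}) : f ord0 = i ->
  f = ext [ffun j => f (lift ord0 j)].
Proof.
move=> H; apply/ffunP => j; rewrite ffunE.
by case: unliftP => [j' ->|->]; rewrite ?ffunE.
Qed.

Lemma sum_f0 (R : nmodType) (F : {ffun 'I_k.+1 -> 'I_n} -> R) :
  \sum_(f : {ffun 'I_k.+1 -> 'I_n} | f ord0 == i) F f = \sum_g F (ext g).
Proof.
rewrite -(big_imset F (in2W ext_inj)) /=.
apply: eq_bigl => f; apply/eqP/imsetP => [H|[g _ ->]]; last exact: ext0.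
by exists [ffun j => f (lift ord0 j)]; rewrite ?inE // -ext_surj.
Qed.

Lemma imset_ext g : [set ext g j | j : 'I_k.+1] = i |: [set g j | j : 'I_k].
Proof.
apply/setP => v; rewrite !inE; apply/imsetP/orP.
  case=> j _ ->; case: (unliftP ord0 j) => [j' ->|->]; last by rewrite ext0 eqxx; left.
  by rewrite extS; right; apply/imsetP; exists j'.
case=> [/eqP ->|/imsetP [j _ ->]]; first by exists ord0; rewrite ?ext0.
by exists (lift ord0 j); rewrite ?extS.
Qed.

End Count.



Section Count2.
Variables (n k : nat) (i : 'I_n).

Definition Gset (A : {set 'I_n}) :=
  [set g : {ffun 'I_k -> 'I_n} in ffun_on (mem A) | injectiveb g].

Lemma card_Gset (A : {set 'I_n}) : #|A| = k -> #|Gset A| = k`!.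
Proof. by move=> HA; rewrite /Gset card_inj_ffuns_on card_ord cardE -HA -cardE ffactnn. Qed.

Lemma im_Gset (A : {set 'I_n}) g : #|A| = k -> g \in Gset A -> [set g j | j : 'I_k] = A.
Proof.
move=> HA; rewrite inE => /andP [/ffun_onP Hon /injectiveP Hinj].
apply/eqP; rewrite eqEcard card_imset // card_ord HA leqnn andbT.
by apply/subsetP => v /imsetP [j _ ->].
Qed.

Lemma key (e : {set 'I_n}) (g : {ffun 'I_k -> 'I_n}) : #|e| = k.+1 -> i \in e ->
  (i |: [set g j | j : 'I_k] == e) = (g \in Gset (e :\ i)).
Proof.
move=> He ie; have HD : #|e :\ i| = k by move: (cardsD1 i e); rewrite ie He add1n => -[].
apply/eqP/idP => [H|Hg]; last by rewrite (im_Gset HD Hg) setD1K.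
have Hc := leq_imset_card g 'I_k; rewrite card_ord in Hc.
have := cardsU1 i [set g j | j : 'I_k]; rewrite H He.
case: (boolP (i \in _)) => /= Hi; first by rewrite add0n => Hk; move: Hc; rewrite -Hk ltnn.
rewrite add1n => -[Hk].
rewrite inE; apply/andP; split.
  apply/ffun_onP => j; rewrite inE; apply/andP; split.
    by rewrite in_set1; apply: (contraNneq _ Hi) => <-; apply/imsetP; exists j.
  by rewrite -H; apply/setU1P; right; apply/imsetP; exists j.
apply/injectiveP => j1 j2.
have /imset_injP : #|[set g j | j : 'I_k]| == #|'I_k| by apply/eqP; rewrite card_ord; exact/esym.
by move=> Hinj; apply: Hinj.
Qed.

Lemma notin_key (e : {set 'I_n}) (g : {ffun 'I_k -> 'I_n}) : i \notin e -> (i |: [set g j | j : 'I_k] == e) = false.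
Proof. by move=> Hi; apply/negbTE; apply: contraNneq Hi => <-; rewrite setU11. Qed.

Lemma prod_Gset (R : comPzSemiRingType) (x : 'I_n -> R) (A : {set 'I_n}) g : #|A| = k -> g \in Gset A ->
  \prod_j x (g j) = \prod_(v in A) x v.
Proof.
move=> HA Hg; rewrite -(im_Gset HA Hg) big_imset //=.
by move: Hg; rewrite inE => /andP [_ /injectiveP Hinj] a b _ _; apply: Hinj.
Qed.

End Count2.



Lemma tapply_A (C : numClosedFieldType) n k (E : {set {set 'I_n}}) (alpha : C)
   (x : 'I_n -> C) i :
  uniform k.+1 E ->
  tapply (@A_alpha C n k.+1 E alpha) x i =
  alpha * (deg E i)%:R * x i ^+ k +
  (1 - alpha) * \sum_(e in E | i \in e) \prod_(v in e :\ i) x v.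
Proof.
move=> Hunif; rewrite /tapply.
rewrite (eq_bigl (fun f : {ffun 'I_k.+1 -> 'I_n} => f ord0 == i)); last first.
  move=> f; apply/forallP/eqP => [H|H j]; first by move/implyP: (H ord0) => /(_ isT) /eqP.
  apply/implyP => /eqP Hj; have -> : j = ord0 by apply: ord_inj.
  by rewrite H.
rewrite (sum_f0 i).
under eq_bigr => g _.
  rewrite big_mkcond big_ord_recl /= mul1r.
  under eq_bigr => j _ do rewrite extS.
  rewrite /A_alpha mulrDl -!mulrA.
over.
rewrite big_split -!mulr_sumr -mulrA; congr (_ * _ + _ * _).
  rewrite (bigD1 [ffun => i]) //=.
  rewrite [X in _ + X](_ : _ = 0) ?addr0; last first.
    apply: big1.
    move=> g Hg; rewrite /deg_tensor [X in X * _]big_pred0 ?mul0r // => i'.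
    apply/negP => /forallP H; move/negP: Hg; apply; apply/eqP/ffunP => j.
    by move: (H ord0) (H (lift ord0 j)); rewrite ext0 extS ffunE => /eqP -> /eqP.
  rewrite /deg_tensor (big_pred1 i); last first.
    move=> i'; rewrite /=; apply/forallP/eqP => [H|-> j].
      by have := H ord0; rewrite ext0 => /eqP.
    by case: (unliftP ord0 j) => [j' ->|->]; rewrite ?extS ?ext0 ?ffunE.
  by rewrite (eq_bigr (fun _ => x i)) ?prodr_const ?card_ord // => j _; rewrite ffunE.
rewrite /adj_tensor.
under eq_bigr => g _ do rewrite imset_ext.
rewrite (bigID (fun g : {ffun 'I_k -> 'I_n} => i |: [set g j | j : 'I_k] \in E)) /=.
rewrite [X in _ + X]big1 ?addr0; last by move=> g /negbTE ->; rewrite mul0r.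
rewrite (partition_big (fun g : {ffun 'I_k -> 'I_n} => i |: [set g j | j : 'I_k])
   (fun e => e \in E)) //=.
rewrite [RHS]big_mkcondr /=; apply: eq_bigr => e He.
case: (boolP (i \in e)) => ie; last first.
  by rewrite big_pred0 // => g; rewrite notin_key // andbF.
have Hc := Hunif e He.
rewrite (eq_bigl (fun g => g \in Gset k (e :\ i))); last first.
  by move=> g; rewrite -(key _ Hc ie) andb_idl // => /eqP ->.
rewrite (eq_bigr (fun _ => (k`!)%:R^-1 * \prod_(v in e :\ i) x v)); last first.
  move=> g Hg; have Heq : i |: [set g j | j : 'I_k] = e by apply/eqP; rewrite (key _ Hc ie).
  have HD : #|e :\ i| = k by move: (cardsD1 i e); rewrite ie Hc add1n => -[].
  by rewrite Heq He (prod_Gset _ HD Hg).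
rewrite sumr_const card_Gset; last by move: (cardsD1 i e); rewrite ie Hc add1n => -[].
rewrite -mulrnAl -mulr_natr ?mul1n mulVf ?mul1r //.
by rewrite pnatr_eq0 -lt0n fact_gt0.
Qed.



Lemma amgm_aux (R : numDomainType) (a b : R) m : 0 <= a -> 0 <= b ->
  0 <= (a ^+ m - b ^+ m) * (a - b).
Proof.
move=> a0 b0; case/orP: (real_leVge (ger0_real a0) (ger0_real b0)) => [ab|ba].
  by apply: mulr_le0; rewrite subr_le0 // lerXn2r.
by apply: mulr_ge0; rewrite subr_ge0 // lerXn2r.
Qed.

Lemma amgm (R : numDomainType) (a b : R) k : 0 <= a -> 0 <= b ->
  (k.+1)%:R * (a ^+ k * b) <= k%:R * a ^+ k.+1 + b ^+ k.+1.
Proof.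
move=> a0 b0; elim: k => [|k IH]; first by rewrite expr0 !mul1r mul0r add0r expr1.
have H1 : a * ((k.+1)%:R * (a ^+ k * b)) <= a * (k%:R * a ^+ k.+1 + b ^+ k.+1).
  by rewrite ler_wpM2l.
have H2 := amgm_aux k.+1 a0 b0.
rewrite -subr_ge0.
have -> : (k.+1)%:R * a ^+ k.+2 + b ^+ k.+2 - (k.+2)%:R * (a ^+ k.+1 * b) =
  (a * (k%:R * a ^+ k.+1 + b ^+ k.+1) - a * ((k.+1)%:R * (a ^+ k * b))) +
  (a ^+ k.+1 - b ^+ k.+1) * (a - b).
  rewrite -[(k.+2)%:R]natr1 -[(k.+1)%:R]natr1 !exprS; ring.
by apply: addr_ge0; rewrite // subr_ge0.
Qed.

Lemma prod_eq_max (R : numDomainType) (I : finType) (A : {set I}) (y : I -> R) c :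
  (forall v, v \in A -> 0 < y v <= c) -> \prod_(v in A) y v = c ^+ #|A| ->
  forall v, v \in A -> y v = c.
Proof.
move=> Hy Hp v vA; have /andP [y0 yc] := Hy v vA.
apply/eqP; rewrite eq_le yc /=; apply/negP => /negP Hlt.
have Hlt' : y v < c.
  rewrite lt_neqAle yc andbT; apply: contraNneq Hlt => ->; exact: lexx.
have c0 : 0 < c by apply: lt_le_trans yc.
move: Hp; rewrite (big_setD1 v vA) /= (cardsD1 v A) vA add1n exprS => Hp.
have H1 : \prod_(u in A :\ v) y u <= c ^+ #|A :\ v|.
  rewrite -prodr_const; apply: ler_prod => u; rewrite inE => /andP [_ uA].
  by have /andP [u0 uc] := Hy u uA; rewrite ltW.
have H2 : 0 < \prod_(u in A :\ v) y u.
  by apply: prodr_gt0 => u; rewrite inE => /andP [_ uA]; have /andP [] := Hy u uA.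
have : y v * \prod_(u in A :\ v) y u < c * c ^+ #|A :\ v|.
  apply: (lt_le_trans (y := c * \prod_(u in A :\ v) y u)).
    by rewrite ltr_pM2r.
  by rewrite ler_wpM2l // ltW.
by rewrite Hp ltxx.
Qed.

Lemma root_pow (C : numClosedFieldType) m (y : C) : (0 < m)%N -> 0 <= y ->
  m.-root (y ^+ m) = y.
Proof.
move=> m0 y0; apply: (pexpIrn m0); rewrite ?rootCK //.
by rewrite qualifE /= rootC_ge0 // exprn_ge0.
Qed.



Section Main.
Variables (C : numClosedFieldType) (n k : nat) (E : {set {set 'I_n}})
  (alpha rho xbar : C) (x : 'I_n -> C).
Hypotheses (Hk : (0 < k)%N) (Ha0 : 0 <= alpha) (Ha1 : alpha < 1)
  (Hunif : uniform k.+1 E) (Hconn : connected E) (Hpos : forall i, 0 < x i)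
  (Hsum : \sum_i x i ^+ k.+1 = 1).
Hypotheses (Hxb : exists i, x i = xbar) (Hle : forall i, x i <= xbar).

Let d i : C := (deg E i)%:R.
Let P i := \sum_(e in E | i \in e) \prod_(v in e :\ i) x v.
Let w (e : {set 'I_n}) := \prod_(v in e) x v.
Hypothesis (Heig : forall i, rho * x i ^+ k = alpha * d i * x i ^+ k + (1 - alpha) * P i).

Lemma xbar_pos : 0 < xbar.
Proof. by case: Hxb => i <-. Qed.

Lemma a1_pos : 0 < 1 - alpha.
Proof. by rewrite subr_gt0. Qed.

Lemma F1 : rho = alpha * \sum_i d i * x i ^+ k.+1 + (1 - alpha) * \sum_i x i * P i.
Proof.
rewrite {1}(_ : rho = rho * \sum_i x i ^+ k.+1); last by rewrite Hsum mulr1.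
rewrite mulr_sumr !mulr_sumr -big_split /=; apply: eq_bigr => i _.
have := Heig i; rewrite !exprS => H.
transitivity (x i * (rho * x i ^+ k)); first by ring.
by rewrite H; ring.
Qed.

Lemma cardD (e : {set 'I_n}) i : e \in E -> i \in e -> #|e :\ i| = k.
Proof. by move=> He ie; move: (cardsD1 i e); rewrite ie (Hunif He) add1n => -[]. Qed.

Lemma xP i e : e \in E -> i \in e -> x i * \prod_(v in e :\ i) x v = w e.
Proof. by move=> He ie; rewrite /w (big_setD1 i ie). Qed.

Lemma F2 : \sum_i x i * P i = (k.+1)%:R * \sum_(e in E) w e.
Proof.
transitivity (\sum_i \sum_(e in E) (if i \in e then w e else 0)).
  apply: eq_bigr => i _; rewrite /P mulr_sumr big_mkcondr /=.
  by apply: eq_bigr => e He; case: ifP => ie; rewrite ?mulr0 ?xP.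
rewrite exchange_big mulr_sumr; apply: eq_bigr => e He.
rewrite -big_mkcond /= sumr_const -(Hunif He) mulr_natl.
by rewrite cardE /= -cardE.
Qed.

Lemma degle i : d i <= (max_deg E)%:R.
Proof. by rewrite ler_nat /max_deg (leq_bigmax i). Qed.

Lemma F3 : alpha * \sum_i d i * x i ^+ k.+1 <= alpha * (max_deg E)%:R.
Proof.
apply: ler_wpM2l => //.
rewrite (_ : (max_deg E)%:R = (max_deg E)%:R * \sum_i x i ^+ k.+1); last by rewrite Hsum mulr1.
rewrite mulr_sumr.
apply: ler_sum => i _; apply: ler_wpM2r; first by rewrite exprn_ge0 // ltW.
exact: degle.
Qed.


Lemma w_le e : e \in E -> w e <= xbar ^+ k.+1.
Proof.
move=> He; rewrite -(Hunif He) -prodr_const; apply: ler_prod => v _.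
by rewrite ltW ?Hpos ?Hle.
Qed.

Lemma bound1 : rho <= alpha * (max_deg E)%:R + (1 - alpha) * (k.+1 * #|E|)%:R * xbar ^+ k.+1.
Proof.
rewrite {1}F1 F2; apply: lerD; first exact: F3.
rewrite -mulrA; apply: ler_wpM2l; first exact: ltW a1_pos.
rewrite natrM -mulrA; apply: ler_wpM2l; first exact: ler0n.
rewrite mulr_natl -sumr_const; apply: ler_sum => e He; exact: w_le.
Qed.

Lemma q_le i e : e \in E -> i \in e -> \prod_(v in e :\ i) x v <= xbar ^+ k.
Proof.
move=> He ie; rewrite -(cardD He ie) -prodr_const; apply: ler_prod => v _.
by rewrite ltW ?Hpos ?Hle.
Qed.

Lemma P_le i : P i <= d i * xbar ^+ k.
Proof.
rewrite /P (eq_bigl (fun e => e \in [set e in E | i \in e])); last by move=> e; rewrite inE.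
rewrite /d /deg mulr_natl -sumr_const; apply: ler_sum => e; rewrite inE => /andP [He ie].
exact: q_le.
Qed.

Lemma holder : \sum_i x i * d i <=
  (k.+1).-root ((\sum_i k.-root ((deg E i)%:R ^+ k.+1)) ^+ k).
Proof.
pose u i := k.-root (d i).
have u0 i : 0 <= u i by rewrite rootC_ge0 // ler0n.
have uk i : u i ^+ k = d i by rewrite rootCK.
have Hr i : k.-root ((deg E i)%:R ^+ k.+1) = u i ^+ k.+1.
  by rewrite -/(d i) -uk -exprM mulnC exprM root_pow // exprn_ge0.
rewrite [X in _ <= _.-root (X ^+ _)](eq_bigr (fun i => u i ^+ k.+1) (fun i _ => Hr i)).
set S := \sum_i u i ^+ k.+1.
have S0 : 0 <= S by apply: sumr_ge0 => i _; exact: exprn_ge0.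
pose t := (k.+1).-root S.
have t0 : 0 <= t by rewrite rootC_ge0.
have tK : t ^+ k.+1 = S by rewrite rootCK.
have -> : (k.+1).-root (S ^+ k) = t ^+ k.
  by rewrite -tK -exprM mulnC exprM root_pow // exprn_ge0.
have [tz|tpos] := eqVneq t 0.
  have S00 : S = 0 by rewrite -tK tz expr0n.
  have ui i : u i = 0.
    have := psumr_eq0P (P := predT) (F := fun i => u i ^+ k.+1) (fun i _ => exprn_ge0 k.+1 (u0 i)) S00 (i := i) isT.
    by move/eqP; rewrite expf_eq0 => /andP [_ /eqP].
  rewrite tz expr0n (gtn_eqF Hk) /=; rewrite big1 // => i _.
  by rewrite -uk ui expr0n (gtn_eqF Hk) mulr0.
have tp : 0 < t by rewrite lt_def tpos t0.
have tkp : 0 < t ^+ k by rewrite exprn_gt0.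
have Sp : S != 0 by rewrite -tK expf_neq0.
have H1 : \sum_i (u i / t) ^+ k.+1 = 1.
  under eq_bigr => i _ do rewrite expr_div_n.
  by rewrite -mulr_suml tK mulfV.
have H2 : (k.+1)%:R * \sum_i ((u i / t) ^+ k * x i) <= (k.+1)%:R :> C.
  rewrite mulr_sumr.
  apply: (le_trans (y := \sum_i (k%:R * (u i / t) ^+ k.+1 + x i ^+ k.+1))).
    apply: ler_sum => i _; apply: amgm; last exact: ltW.
    by rewrite divr_ge0.
  by rewrite big_split /= -mulr_sumr H1 Hsum mulr1 -natr1.
have H3 : \sum_i ((u i / t) ^+ k * x i) <= 1.
  by rewrite -(ler_pM2l (ltr0Sn _ k)) mulr1.
have -> : \sum_i x i * d i = t ^+ k * \sum_i ((u i / t) ^+ k * x i).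
  rewrite mulr_sumr; apply: eq_bigr => i _.
  rewrite expr_div_n uk mulrC mulrA mulrCA mulfV ?mulr1 //.
  by rewrite gt_eqF.
by rewrite -[X in _ <= X]mulr1 ler_wpM2l // ltW.
Qed.


Lemma eq_helper (a A b B c : C) : a <= A -> b <= B -> 0 < c ->
  a + c * b = A + c * B -> b = B.
Proof.
move=> aA bB c0 H.
have : (A - a) + c * (B - b) == 0.
  have -> : (A - a) + c * (B - b) = (A + c * B) - (a + c * b) by ring.
  by rewrite -H subrr.
have h1 : 0 <= A - a by rewrite subr_ge0.
have h2 : 0 <= c * (B - b) by rewrite mulr_ge0 ?subr_ge0 // ltW.
rewrite paddr_eq0 //.
by case/andP => _; rewrite mulf_eq0 gt_eqF //= subr_eq0 => /eqP.
Qed.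

Lemma P_eq i : P i = d i * xbar ^+ k ->
  forall e v, e \in E -> i \in e -> v \in e :\ i -> x v = xbar.
Proof.
move=> H e v He ie ve.
have Hq : \prod_(v in e :\ i) x v = xbar ^+ k.
  have H0 : \sum_(e in [set e in E | i \in e]) (xbar ^+ k - \prod_(v in e :\ i) x v) = 0.
    rewrite sumrB sumr_const.
    rewrite (eq_bigl (fun e => (e \in E) && (i \in e))); last by move=> f; rewrite inE.
    by rewrite -/(P i) H /d /deg mulr_natl subrr.
  have Hge : forall f, f \in [set e in E | i \in e] -> 0 <= xbar ^+ k - \prod_(v in f :\ i) x v.
    by move=> f; rewrite inE => /andP [Hf iF]; rewrite subr_ge0 q_le.
  have Hei : e \in [set e in E | i \in e] by rewrite inE He ie.
  have := psumr_eq0P Hge H0 Hei.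
  by move/eqP; rewrite subr_eq0 => /eqP <-.
apply: (prod_eq_max (A := e :\ i)) => //; last by rewrite (cardD He ie).
by move=> u _; rewrite Hpos Hle.
Qed.

Lemma propagate :
  (forall i e v, x i = xbar -> e \in E -> i \in e -> v \in e -> x v = xbar) ->
  forall u, x u = xbar.
Proof.
move=> Hcl u; case: Hxb => i0 Hi0.
have [vs [es [[Hsz _ _ Hall] [H0 Hlast Hstep]]]] := Hconn i0 u.
have Ht : forall t, (t <= size es)%N -> x (nth i0 vs t) = xbar.
  elim=> [|t IH] Ht; first by rewrite H0.
  have [H1 H2] := Hstep t Ht.
  apply: (Hcl (nth i0 vs t) (nth set0 es t)) => //; first by apply: IH; exact: ltnW.
  by move/allP: Hall; apply; rewrite mem_nth.
by rewrite -Hlast -nth_last Hsz /=; apply: Ht.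
Qed.

Lemma const_deg : (forall i, x i = xbar) -> forall i, rho = d i.
Proof.
move=> Hc i; have := Heig i; rewrite Hc.
have -> : P i = d i * xbar ^+ k.
  rewrite /P (eq_bigl (fun e => e \in [set e in E | i \in e])); last by move=> e; rewrite inE.
  rewrite /d /deg mulr_natl -sumr_const; apply: eq_bigr => e; rewrite inE => /andP [He ie].
  by rewrite (eq_bigr (fun _ => xbar)) ?prodr_const ?(cardD He ie) // => v _; rewrite Hc.
have xk : xbar ^+ k != 0 by rewrite expf_neq0 // gt_eqF // xbar_pos.
move=> H; apply: (mulIf xk); rewrite H; ring.
Qed.

Lemma const_regular : (forall i, x i = xbar) -> regular E.
Proof.
move=> Hc i j; apply/eqP; rewrite -(eqr_nat C) -/(d i) -/(d j).
by rewrite -!const_deg.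
Qed.

Lemma edges_const : (forall e v, e \in E -> v \in e -> x v = xbar) -> regular E.
Proof.
move=> H; apply: const_regular; apply: propagate => i e v _ He _ ve. exact: (H e v He ve).
Qed.

Lemma eq1 : rho = alpha * (max_deg E)%:R + (1 - alpha) * (k.+1 * #|E|)%:R * xbar ^+ k.+1 ->
  regular E.
Proof.
move=> Hr; apply: edges_const => e v He ve.
have Hs : \sum_(e in E) w e = \sum_(e in E) xbar ^+ k.+1.
  move: Hr; rewrite {1}F1 F2 natrM -!mulrA => Hr.
  have := eq_helper F3 _ a1_pos Hr.
  have Hle' : (k.+1)%:R * \sum_(e in E) w e <= (k.+1)%:R * (#|E|%:R * xbar ^+ k.+1).
    rewrite ler_wpM2l // mulr_natl -sumr_const; apply: ler_sum => f Hf; exact: w_le.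
  move=> /(_ Hle') /eqP; rewrite (inj_eq (mulfI _)) ?pnatr_eq0 // mulr_natl -sumr_const.
  by move/eqP.
have H0 : \sum_(e in E) (xbar ^+ k.+1 - w e) = 0 by rewrite sumrB Hs subrr.
have Hge : forall f, f \in E -> 0 <= xbar ^+ k.+1 - w f.
  by move=> f Hf; rewrite subr_ge0 w_le.
have := psumr_eq0P Hge H0 He; move/eqP; rewrite subr_eq0 => /eqP Hw.
apply: (prod_eq_max (A := e)) => //; first by move=> u _; rewrite Hpos Hle.
by rewrite -/(w e) -Hw (Hunif He).
Qed.


Let R : C := (k.+1).-root ((\sum_i k.-root ((deg E i)%:R ^+ k.+1)) ^+ k).

Lemma T_le : \sum_i x i * P i <= (\sum_i x i * d i) * xbar ^+ k.
Proof.
rewrite mulr_suml; apply: ler_sum => i _; rewrite -mulrA ler_wpM2l //; first exact: ltW.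
exact: P_le.
Qed.

Lemma xk_ge0 : 0 <= xbar ^+ k.
Proof. by rewrite exprn_ge0 // ltW // xbar_pos. Qed.

Lemma T_le2 : \sum_i x i * P i <= R * xbar ^+ k.
Proof.
apply: le_trans T_le _; rewrite ler_wpM2r //; first exact: xk_ge0.
exact: holder.
Qed.

Lemma bound2 : rho <= alpha * (max_deg E)%:R + (1 - alpha) * R * xbar ^+ k.
Proof.
rewrite {1}F1 -mulrA; apply: lerD; first exact: F3.
by rewrite ler_wpM2l ?T_le2 // ltW // a1_pos.
Qed.

Lemma eq2 : rho = alpha * (max_deg E)%:R + (1 - alpha) * R * xbar ^+ k -> regular E.
Proof.
move=> Hr.
have HT : \sum_i x i * P i = R * xbar ^+ k.
  by move: Hr; rewrite {1}F1 -mulrA; apply: eq_helper F3 T_le2 a1_pos.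
have HT' : \sum_i x i * P i = (\sum_i x i * d i) * xbar ^+ k.
  apply/eqP; rewrite eq_le T_le /= HT ler_wpM2r //; first exact: xk_ge0.
  exact: holder.
have HPi : forall i, P i = d i * xbar ^+ k.
  have H0 : \sum_i x i * (d i * xbar ^+ k - P i) = 0.
    under eq_bigr => i _ do rewrite mulrBr.
    by rewrite sumrB HT' mulr_suml; apply/eqP; rewrite subr_eq0; apply/eqP; apply: eq_bigr => i _; rewrite mulrA.
  have Hge : forall i, predT i -> 0 <= x i * (d i * xbar ^+ k - P i).
    by move=> j _; rewrite mulr_ge0 ?subr_ge0 ?P_le // ltW.
  move=> i; have := psumr_eq0P Hge H0 (isT : predT i).
  move/eqP; rewrite mulf_eq0 gt_eqF //= subr_eq0 => /eqP //.
apply: edges_const => e v He ve.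
have : #|e :\ v| = k by apply: cardD.
move=> Hc; have : (0 < #|e :\ v|)%N by rewrite Hc.
case/card_gt0P => i; rewrite inE => /andP [iv ie].
apply: (P_eq (HPi i) He ie); rewrite inE ve andbT in_set1; by rewrite in_set1 eq_sym in iv.
Qed.

Hypothesis Hspec : forall lam, @is_eigenvalue C n k.+1 (@A_alpha C n k.+1 E alpha) lam -> `|lam| <= rho.

Lemma reg_rho i0 : regular E -> d i0 <= rho.
Proof.
move=> Hreg.
have Hev : @is_eigenvalue C n k.+1 (@A_alpha C n k.+1 E alpha) (d i0).
  exists (fun _ => 1); split; first by exists i0; exact: oner_neq0.
  move=> i; rewrite tapply_A // expr1n !mulr1.
  rewrite (eq_bigr (fun _ => 1)); last by move=> e _; rewrite prodr_const expr1n.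
  rewrite (eq_bigl (fun e => e \in [set e in E | i \in e])); last by move=> e; rewrite inE.
  rewrite sumr_const -/(deg E i) /d (Hreg i0 i); ring.
by have := Hspec Hev; rewrite ger0_norm // ler0n.
Qed.

Lemma reg_const : regular E -> forall u, x u = xbar.
Proof.
move=> Hreg; apply: propagate => i e v Hi He ie ve.
have [->|vi] := eqVneq v i; first by [].
have HP : P i = d i * xbar ^+ k.
  apply/eqP; rewrite eq_le P_le /=.
  have H := Heig i; rewrite Hi in H.
  have H1 : d i * xbar ^+ k <= rho * xbar ^+ k.
    by rewrite ler_wpM2r ?reg_rho //; exact: xk_ge0.
  rewrite -(ler_pM2l a1_pos).
  have -> : (1 - alpha) * P i = rho * xbar ^+ k - alpha * d i * xbar ^+ k by rewrite H; ring.
  have -> : (1 - alpha) * (d i * xbar ^+ k) = d i * xbar ^+ k - alpha * d i * xbar ^+ k by ring.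
  by rewrite lerD2r.
by apply: (P_eq HP He ie); rewrite inE in_set1 vi ve.
Qed.


Lemma reg_values : regular E ->
  rho = alpha * (max_deg E)%:R + (1 - alpha) * (k.+1 * #|E|)%:R * xbar ^+ k.+1 /\
  rho = alpha * (max_deg E)%:R + (1 - alpha) * R * xbar ^+ k.
Proof.
move=> Hreg; have Hc := reg_const Hreg; case: Hxb => i0 Hi0.
have Hd : forall i, d i = d i0 by move=> i; rewrite /d (Hreg i i0).
have Hrho : rho = d i0 := const_deg Hc i0.
have HD : (max_deg E)%:R = d i0.
  congr (_%:R); apply/eqP; rewrite eqn_leq leq_bigmax andbT.
  by apply/bigmax_leqP => i _; rewrite (Hreg i i0).
have xK0 : xbar ^+ k.+1 != 0 by rewrite expf_neq0 // gt_eqF // xbar_pos.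
have xk0 : xbar ^+ k != 0 by rewrite expf_neq0 // gt_eqF // xbar_pos.
have Hn : n%:R * xbar ^+ k.+1 = 1.
  have := Hsum; rewrite (eq_bigr (fun _ => xbar ^+ k.+1)); last by move=> i _; rewrite Hc.
  by rewrite sumr_const card_ord mulr_natl.
split.
  rewrite {1}F1 F2 HD.
  have -> : \sum_i d i * x i ^+ k.+1 = d i0.
    rewrite (eq_bigr (fun i => d i0 * x i ^+ k.+1)); last by move=> i _; rewrite Hd.
    by rewrite -mulr_sumr Hsum mulr1.
  have -> : \sum_(e in E) w e = #|E|%:R * xbar ^+ k.+1.
    rewrite mulr_natl -sumr_const; apply: eq_bigr => e He.
    by rewrite /w (eq_bigr (fun _ => xbar)) ?prodr_const ?(Hunif He) // => v _; rewrite Hc.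
  rewrite natrM; ring.
suff HR : R * xbar ^+ k = d i0 by rewrite -mulrA HR HD Hrho; ring.
pose u := k.-root (d i0).
have u0 : 0 <= u by rewrite rootC_ge0 // ler0n.
have uk : u ^+ k = d i0 by rewrite rootCK.
have Hr : k.-root ((deg E i0)%:R ^+ k.+1) = u ^+ k.+1.
  by rewrite -/(d i0) -uk -exprM mulnC exprM root_pow // exprn_ge0.
have y0 : 0 <= u / xbar by rewrite divr_ge0 // ltW // xbar_pos.
have HS : \sum_i k.-root ((deg E i)%:R ^+ k.+1) = (u / xbar) ^+ k.+1.
  rewrite (eq_bigr (fun _ => u ^+ k.+1)); last by move=> i _; rewrite (Hreg i i0) Hr.
  rewrite sumr_const card_ord -mulr_natl expr_div_n.
  have -> : n%:R = (xbar ^+ k.+1)^-1 by apply: (mulIf xK0); rewrite Hn mulVf.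
  by rewrite mulrC.
rewrite /R HS -exprM mulnC exprM root_pow // ?exprn_ge0 //.
by rewrite expr_div_n mulfVK.
Qed.


Lemma main_sec :
  [/\ rho <= alpha * (max_deg E)%:R + (1 - alpha) * (k.+1 * #|E|)%:R * xbar ^+ k.+1,
      rho <= alpha * (max_deg E)%:R + (1 - alpha) * R * xbar ^+ k,
      rho = alpha * (max_deg E)%:R + (1 - alpha) * (k.+1 * #|E|)%:R * xbar ^+ k.+1
        <-> regular E &
      rho = alpha * (max_deg E)%:R + (1 - alpha) * R * xbar ^+ k <-> regular E].
Proof.
split; [exact: bound1 | exact: bound2 | split | split].
- exact: eq1.
- by move=> Hr; case: (reg_values Hr).
- exact: eq2.
- by move=> Hr; case: (reg_values Hr).
Qed.

End Main.

Theorem theorem3p2 (C : numClosedFieldType) (n k : nat) (E : {set {set 'I_n}})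
  (alpha rho xbar : C) (x : 'I_n -> C) :
  (2 <= k)%N -> 0 <= alpha -> alpha < 1 ->
  uniform k E -> connected E ->
  is_spectral_radius (@A_alpha C n k E alpha) rho ->
  is_alpha_perron_vector k E alpha rho x ->
  (exists i, x i = xbar) -> (forall i, x i <= xbar) ->
  let Delta := (max_deg E)%:R in
  let b1 := alpha * Delta + (1 - alpha) * (k * #|E|)%:R * xbar ^+ k in
  let b2 := alpha * Delta + (1 - alpha) *
      k.-root ((\sum_i (k.-1).-root ((deg E i)%:R ^+ k)) ^+ k.-1)
      * xbar ^+ k.-1 in
  [/\ rho <= b1, rho <= b2, rho = b1 <-> regular E & rho = b2 <-> regular E].
Proof.
case: k => [|k] Hk2; first by [].
have Hk : (0 < k)%N by [].
move=> Ha0 Ha1 Hunif Hconn [_ Hspec] [Hpos Hsum Heig'] Hxb Hle Delta b1 b2.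
have Heig : forall i, rho * x i ^+ k = alpha * (deg E i)%:R * x i ^+ k +
    (1 - alpha) * \sum_(e in E | i \in e) \prod_(v in e :\ i) x v.
  by move=> i; rewrite -tapply_A // Heig'.
exact: (main_sec Hk Ha0 Ha1 Hunif Hconn Hpos Hsum Hxb Hle Heig Hspec).
Qed.
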